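(* Let $A\in\mathbb{R}^{m\times n}$ be semimonotone ($A^{\dagger}\geq 0$) and let $(U_k,V_k,E_k)_{k=1}^{p}$ be a proper weak regular multisplitting of $A$. Let $H=\sum_{k=1}^{p}E_kU_k^{\dagger}V_k$ and let $A=B-C$ be the splitting induced by $H$, where $B=A(I-H)^{-1}$ and $C=B-A$. If $A\geq 0$ and $R(E_k)\subseteq R(A^{T})$ for each $k=1,\ldots,p$, then $A=B-C$ is a proper regular splitting.
   Context: $A^{\dagger}$ denotes the Moore–Penrose inverse, $R(\cdot)$, $N(\cdot)$ range and null space; inequalities are entrywise. A splitting $A=U-V$ is proper if $R(U)=R(A)$ and $N(U)=N(A)$; a proper splitting is proper weak regular if $U^{\dagger}\geq 0$ and $U^{\dagger}V\geq 0$, and proper regular if $U^{\dagger}\geq 0$ and $V\geq 0$. A proper weak regular multisplitting of $A$ is a triplet $(U_k,V_k,E_k)_{k=1}^{p}$ where each $A=U_k-V_k$ is a proper weak regular splitting and each $E_k\geq 0$ is an $n\times n$ diagonal matrix with $\sum_{k=1}^{p}E_k=I_n$. Under these hypotheses $I-H$ is invertible and $B^{\dagger}C=H$. *)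

(* Defs.v *)
From HB Require Import structures.
From mathcomp Require Import all_boot all_order all_algebra.
From Stdlib Require Import ClassicalEpsilon.
Set Implicit Arguments. Unset Strict Implicit. Unset Printing Implicit Defensive.
Import Order.TTheory GRing.Theory Num.Theory.
Local Open Scope ring_scope.

Definition is_mp_inverse (R : realFieldType) (m n : nat)
  (A : 'M[R]_(m, n)) (X : 'M[R]_(n, m)) : Prop :=
  [/\ A *m X *m A = A, X *m A *m X = X,
      (A *m X)^T = A *m X & (X *m A)^T = X *m A].

(* The Moore-Penrose inverse A^dagger (exists and is unique over an ordered field). *)
Definition mpinv (R : realFieldType) (m n : nat) (A : 'M[R]_(m, n)) : 'M[R]_(n, m) :=
  epsilon (inhabits 0) (is_mp_inverse A).

Definition nonneg_mx (R : realFieldType) (m n : nat) (M : 'M[R]_(m, n)) : Prop :=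
  forall i j, 0 <= M i j.

Definition range_mx (R : realFieldType) (m n : nat) (M : 'M[R]_(m, n))
  (y : 'cV[R]_m) : Prop := exists x : 'cV[R]_n, y = M *m x.

Definition null_mx (R : realFieldType) (m n : nat) (M : 'M[R]_(m, n))
  (x : 'cV[R]_n) : Prop := M *m x = 0.

Definition proper_splitting (R : realFieldType) (m n : nat)
  (A U V : 'M[R]_(m, n)) : Prop :=
  [/\ A = U - V,
      (forall y, range_mx U y <-> range_mx A y) &
      (forall x, null_mx U x <-> null_mx A x)].

Definition proper_weak_regular_splitting (R : realFieldType) (m n : nat)
  (A U V : 'M[R]_(m, n)) : Prop :=
  [/\ proper_splitting A U V, nonneg_mx (mpinv U) & nonneg_mx (mpinv U *m V)].

Definition proper_regular_splitting (R : realFieldType) (m n : nat)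
  (A U V : 'M[R]_(m, n)) : Prop :=
  [/\ proper_splitting A U V, nonneg_mx (mpinv U) & nonneg_mx V].

Definition proper_weak_regular_multisplitting (R : realFieldType) (m n p : nat)
  (A : 'M[R]_(m, n)) (U V : 'I_p -> 'M[R]_(m, n)) (E : 'I_p -> 'M[R]_n) : Prop :=
  [/\ (forall k, proper_weak_regular_splitting A (U k) (V k)),
      (forall k, is_diag_mx (E k)),
      (forall k, nonneg_mx (E k)) &
      \sum_(k < p) E k = 1%:M].

Definition mult_iter_mx (R : realFieldType) (m n p : nat)
  (U V : 'I_p -> 'M[R]_(m, n)) (E : 'I_p -> 'M[R]_n) : 'M[R]_n :=
  \sum_(k < p) E k *m mpinv (U k) *m V k.

(* Main.v *)
Require Import Defs.
From HB Require Import structures.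
From mathcomp Require Import all_boot all_order all_algebra.
From Stdlib Require Import ClassicalEpsilon.
Set Implicit Arguments. Unset Strict Implicit. Unset Printing Implicit Defensive.
Import Order.TTheory GRing.Theory Num.Theory.
Local Open Scope ring_scope.
Section Aux.
Variable R : realFieldType.

Definition injmx m n (A : 'M[R]_(m, n)) := forall x : 'cV[R]_n, A *m x = 0 -> x = 0.

Lemma injmx_mx m n k (A : 'M[R]_(m, n)) (M : 'M[R]_(n, k)) :
  injmx A -> A *m M = 0 -> M = 0.
Proof.
move=> hA hM; apply/matrixP => i j.
have := hA (col j M); rewrite colE mulmxA hM mul0mx => /(_ erefl) /matrixP /(_ i 0).
by rewrite -colE !mxE.
Qed.

Lemma sumsq0 n (x : 'cV[R]_n) : x^T *m x = 0 -> x = 0.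
Proof.
move=> /matrixP /(_ 0 0); rewrite !mxE => h.
apply/matrixP => i j; rewrite (ord1 j) mxE.
have h2 : forall l : 'I_n, true -> 0 <= x^T 0 l * x l 0.
  by move=> l _; rewrite mxE -expr2 sqr_ge0.
have := psumr_eq0P h2 h (i:=i) erefl; rewrite mxE => /eqP.
by rewrite mulf_eq0 orbb => /eqP.
Qed.

Lemma sq_unit n (S : 'M[R]_n) : injmx S -> S \in unitmx.
Proof.
move=> hS; rewrite unitmxE unitfE -det_tr; apply/negP => /det0P [v vn0 hv].
move: vn0; have -> : v = 0; last by rewrite eqxx.
apply: trmx_inj; rewrite trmx0; apply: hS.
by rewrite -[S]trmxK -trmx_mul hv trmx0.
Qed.

Lemma inj_gram m n (A : 'M[R]_(m, n)) : injmx A -> A^T *m A \in unitmx.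
Proof.
move=> hA; apply: sq_unit => x hx; apply: hA; apply: sumsq0.
by rewrite trmx_mul -mulmxA (mulmxA A^T) hx mulmx0.
Qed.

Definition pinv m n (A : 'M[R]_(m, n)) := invmx (A^T *m A) *m A^T.

Lemma pinvK m n (A : 'M[R]_(m, n)) : injmx A -> pinv A *m A = 1%:M.
Proof. by move=> hA; rewrite /pinv -mulmxA mulVmx // inj_gram. Qed.

Lemma mp_uniq m n (A : 'M[R]_(m, n)) X : injmx A ->
  A *m X *m A = A -> (A *m X)^T = A *m X -> X = pinv A.
Proof.
move=> hA h1 h2.
have e : A^T *m A *m X = A^T.
  by rewrite -mulmxA -h2 -trmx_mul h1.
by rewrite /pinv -{1}(mulKmx (inj_gram hA) X) e.
Qed.

Lemma pinv_mp m n (A : 'M[R]_(m, n)) : injmx A -> is_mp_inverse A (pinv A).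
Proof.
move=> hA; have K := pinvK hA; split.
- by rewrite -mulmxA K mulmx1.
- by rewrite K mul1mx.
- rewrite /pinv trmx_mul trmx_mul trmxK trmx_inv trmx_mul trmxK.
  by rewrite mulmxA.
- by rewrite K trmx1.
Qed.

Lemma mpinv_inj m n (A : 'M[R]_(m, n)) : injmx A -> mpinv A = pinv A.
Proof.
move=> hA; rewrite /mpinv.
have [h1 _ h2 _] := epsilon_spec (inhabits 0) (is_mp_inverse A)
   (ex_intro _ _ (pinv_mp hA)).
exact: mp_uniq.
Qed.

End Aux.
Section Aux2.
Variable R : realFieldType.

Lemma nonneg_mul m n k (X : 'M[R]_(m, n)) (Y : 'M[R]_(n, k)) :
  nonneg_mx X -> nonneg_mx Y -> nonneg_mx (X *m Y).
Proof.
move=> hX hY i j; rewrite mxE; apply: sumr_ge0 => l _; exact: mulr_ge0.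
Qed.

Lemma nonneg_sum m n p (F : 'I_p -> 'M[R]_(m, n)) :
  (forall k, nonneg_mx (F k)) -> nonneg_mx (\sum_(k < p) F k).
Proof.
move=> hF i j; rewrite summxE; apply: sumr_ge0 => l _; exact: hF.
Qed.

Lemma mono n (H : 'M[R]_n) (z y : 'cV[R]_n) : nonneg_mx H ->
  (forall i, 0 < z i 0) -> (forall i, (H *m z) i 0 < z i 0) ->
  (forall i, (H *m y) i 0 <= y i 0) -> forall i, 0 <= y i 0.
Proof.
move=> hH hz hHz hy i; rewrite leNgt; apply/negP => yi.
pose f := fun l => - y l 0 / z l 0.
have fpos : 0 < f i by rewrite /f divr_gt0 // oppr_gt0.
case: (@Order.TotalTheory.arg_maxP _ R _ i xpredT f erefl) => i0 _ hmax.
set t := f i0.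
have tpos : 0 < t by apply: lt_le_trans fpos (hmax i erefl).
have hle : forall l, - y l 0 <= t * z l 0.
  move=> l; rewrite -ler_pdivrMr //; exact: hmax.
have heq : - y i0 0 = t * z i0 0 by rewrite /t /f mulrVK // unitfE gt_eqF.
have : - y i0 0 <= t * (H *m z) i0 0.
  have h1 : - y i0 0 <= - (H *m y) i0 0 by rewrite lerN2.
  rewrite (le_trans h1) //.
  rewrite !mxE -sumrN mulr_sumr; apply: ler_sum => l _.
  rewrite -mulrN mulrCA; apply: ler_wpM2l; first exact: hH.
  exact: hle.
rewrite heq ler_pM2l // leNgt hHz //.
Qed.

Lemma rowsum_pos m n (X : 'M[R]_(n, m)) (Y : 'M[R]_(m, n)) :
  nonneg_mx X -> X *m Y = 1%:M -> forall i, 0 < (X *m (const_mx 1 : 'cV[R]_m)) i 0.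
Proof.
move=> hX hXY i; rewrite lt_def; apply/andP; split; last first.
  by rewrite mxE; apply: sumr_ge0 => l _; rewrite mxE mulr1.
apply/negP => /eqP h.
have h0 : forall l, X i l = 0.
  move=> l; rewrite mxE in h.
  have hnn : forall l', true -> 0 <= X i l' * (const_mx 1 : 'cV[R]_m) l' 0.
    by move=> l' _; rewrite mxE mulr1.
  by have := psumr_eq0P hnn h (i:=l) erefl; rewrite mxE mulr1.
have : (X *m Y) i i = 0 by rewrite mxE big1 // => l _; rewrite h0 mul0r.
by rewrite hXY mxE eqxx /= => /eqP; rewrite oner_eq0.
Qed.
End Aux2.
Section Aux3.
Variable R : realFieldType.

Lemma proj_range m n k (A : 'M[R]_(m, n)) (W : 'M[R]_(m, k)) : injmx A ->
  (forall y, range_mx W y -> range_mx A y) -> A *m pinv A *m W = W.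
Proof.
move=> hA hW; apply/matrixP => i j.
have [x hx] : range_mx A (col j W) by apply: hW; exists (delta_mx j 0); rewrite colE.
have [h1 _ _ _] := pinv_mp hA.
have e : A *m pinv A *m col j W = col j W by rewrite {1}hx mulmxA h1.
move: (congr1 (fun M : 'cV_m => M i 0) e).
by rewrite colE mulmxA -!colE !mxE.
Qed.

Lemma pinv_proj m n (A W : 'M[R]_(m, n)) : injmx A ->
  (forall y, range_mx W y -> range_mx A y) -> pinv W *m A *m pinv A = pinv W.
Proof.
move=> hA hW; have [_ _ sym _] := pinv_mp hA.
have e : W^T *m (A *m pinv A) = W^T by rewrite -sym -trmx_mul proj_range.
by rewrite -mulmxA /pinv -mulmxA e.
Qed.

Lemma pos_mix n p (E : 'I_p -> 'M[R]_n) (v : 'I_p -> 'cV[R]_n) :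
  (forall k, nonneg_mx (E k)) -> (forall k i, 0 < v k i 0) ->
  \sum_(k < p) E k = 1%:M -> forall i, 0 < (\sum_(k < p) E k *m v k) i 0.
Proof.
move=> hE hv hs i; rewrite summxE lt_def; apply/andP; split; last first.
  apply: sumr_ge0 => k _; apply: nonneg_mul => //; move=> a b; rewrite (ord1 b); exact/ltW/hv.
apply/negP => /eqP h.
have hnn : forall k, true -> 0 <= (E k *m v k) i 0.
  by move=> k _; apply: nonneg_mul => // a b; rewrite (ord1 b); exact/ltW/hv.
have h0 : forall k, E k i i = 0.
  move=> k; have := psumr_eq0P hnn h (i:=k) erefl; rewrite mxE => h2.
  have hnn2 : forall l, true -> 0 <= E k i l * v k l 0.
    by move=> l _; apply: mulr_ge0; [exact: hE | exact/ltW/hv].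
  have := psumr_eq0P hnn2 h2 (i:=i) erefl => /eqP.
  by rewrite mulf_eq0 (gt_eqF (hv k i)) orbF => /eqP.
have : (\sum_(k < p) E k) i i = 0 by rewrite summxE big1.
by rewrite hs mxE eqxx /= => /eqP; rewrite oner_eq0.
Qed.

End Aux3.
Unset Implicit Arguments.
Theorem theorem5p7 (R : realFieldType) (m n p : nat) (A : 'M[R]_(m, n))
  (U V : 'I_p -> 'M[R]_(m, n)) (E : 'I_p -> 'M[R]_n) :
  nonneg_mx (mpinv A) ->
  proper_weak_regular_multisplitting A U V E ->
  nonneg_mx A ->
  (forall k y, range_mx (E k) y -> range_mx A^T y) ->
  let H := mult_iter_mx U V E in
  let B := A *m invmx (1%:M - H) in
  let C := B - A in
  proper_regular_splitting A B C.
Proof.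
move=> hApos [hsplit _ hEnn hsum] hAnn hrange H B C.
have hAinj : injmx A.
  move=> x hx; apply: sumsq0.
  have -> : x^T *m x = x^T *m \sum_(k < p) (E k *m x).
    by rewrite -mulmx_suml hsum mul1mx.
  rewrite mulmx_sumr big1 // => k _.
  have [y ->] := hrange k (E k *m x) (ex_intro _ x erefl).
  by rewrite mulmxA -trmx_mul hx trmx0 mul0mx.
have hUinj : forall k, injmx (U k).
  move=> k x hx; apply: hAinj.
  by have [[_ _ hN] _ _] := hsplit k; apply/hN.
have hUrg : forall k y, range_mx (U k) y -> range_mx A y.
  by move=> k y; have [[_ hRg _] _ _] := hsplit k; exact: (hRg y).1.
have hArg : forall k y, range_mx A y -> range_mx (U k) y.
  by move=> k y; have [[_ hRg _] _ _] := hsplit k; exact: (hRg y).2.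
have hV : forall k, V k = U k - A.
  by move=> k; have [[-> _ _] _ _] := hsplit k; rewrite opprB addrC subrK.
set pA := pinv A.
have epA : mpinv A = pA by exact: mpinv_inj.
have epU : forall k, mpinv (U k) = pinv (U k) by move=> k; exact: mpinv_inj.
set G := \sum_(k < p) E k *m pinv (U k).
have hHE : H = 1%:M - G *m A.
  rewrite /H /mult_iter_mx /G mulmx_suml -hsum -sumrB; apply: eq_bigr => k _.
  by rewrite epU hV mulmxBr -(mulmxA (E k) _ (U k)) pinvK // mulmx1.
set M := 1%:M - H.
have hM : M = G *m A by rewrite /M hHE opprB addrC subrK.
have hHnn : nonneg_mx H.
  apply: nonneg_sum => k; rewrite -mulmxA; apply: nonneg_mul => //.
  by have [_ _ h] := hsplit k.
have hGnn : nonneg_mx G.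
  apply: nonneg_sum => k; apply: nonneg_mul => //.
  by have [_ h _] := hsplit k; rewrite -epU.
have hGA : G *m A *m pA = G.
  rewrite /G !mulmx_suml; apply: eq_bigr => k _.
  have hk := pinv_proj hAinj (hUrg k); move: hk; rewrite -/pA; set q := pinv (U k) => hk.
  by rewrite -{2}hk !mulmxA.
set e := (const_mx 1 : 'cV[R]_m).
set z := pA *m e.
have hz : forall i, 0 < z i 0.
  by apply: (@rowsum_pos _ _ _ pA A); [rewrite -epA | exact: pinvK].
have hw : forall i, 0 < (G *m e) i 0.
  rewrite /G mulmx_suml; under eq_bigr do rewrite -mulmxA.
  apply: pos_mix => // k i; apply: (@rowsum_pos _ _ _ _ (U k)).
    by have [_ h _] := hsplit k; rewrite -epU.
  exact: pinvK.
have hHz : forall i, (H *m z) i 0 < z i 0.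
  move=> i; have e1 : H = 1%:M - M by rewrite /M opprB addrC subrK.
  rewrite e1 mulmxBl mul1mx hM /z (mulmxA (G *m A) pA e) hGA {1}mxE gtrDl {1}mxE oppr_lt0.
  exact: hw.
have hMy : forall y : 'cV[R]_n, M *m y = y - H *m y.
  by move=> y; rewrite /M mulmxBl mul1mx.
have hMinj : injmx M.
  move=> y hy; have hHy : H *m y = y by apply/eqP; rewrite eq_sym -subr_eq0 -hMy hy.
  apply/matrixP => i j; rewrite (ord1 j) mxE; apply/eqP; rewrite eq_le; apply/andP; split.
    rewrite -oppr_ge0 (_ : - y i 0 = (- y) i 0); last by rewrite mxE.
    apply: (mono hHnn hz hHz) => l.
    by rewrite mulmxN hHy.
  by apply: (mono hHnn hz hHz) => l; rewrite hHy.
have hMu : M \in unitmx by exact: sq_unit.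
set Mi := invmx M.
have hMinn : nonneg_mx Mi.
  move=> i j; have -> : Mi i j = col j Mi i 0 by rewrite mxE.
  apply: (mono hHnn hz hHz) => l.
  have e2 : M *m col j Mi = col j 1%:M by rewrite !colE mulmxA mulmxV.
  have := congr1 (fun X : 'cV_n => X l 0) e2; rewrite /= hMy.
  rewrite !mxE => e3.
  by rewrite -subr_ge0 e3 ler0n.
have hBinj : forall x : 'cV[R]_n, B *m x = 0 -> x = 0.
  move=> x hx; have h0 : Mi *m x = 0 by apply: hAinj; rewrite mulmxA.
  by rewrite -(mulKVmx hMu x) -/Mi h0 mulmx0.
have hBpinv : mpinv B = G.
  rewrite mpinv_inj //; symmetry.
  have eBX : B *m (M *m pA) = A *m pA.
    by rewrite /B -/M -/Mi mulmxA -(mulmxA A) mulVmx // mulmx1.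
  have [h1 _ h3 _] := pinv_mp hAinj.
  rewrite -hGA -hM; apply: mp_uniq => //.
    by rewrite eBX /B -/M -/Mi mulmxA h1.
  by rewrite eBX.
split; [split | |].
- by rewrite /C opprB addrC subrK.
- move=> y; split.
    by move=> [x ->]; exists (Mi *m x); rewrite /B -/M -/Mi mulmxA.
  move=> [x ->]; exists (M *m x); rewrite /B -/M -/Mi -mulmxA mulKmx //.
- move=> x; rewrite /null_mx; split.
    by move=> /hBinj ->; rewrite mulmx0.
  by move=> /hAinj ->; rewrite mulmx0.
- by rewrite hBpinv.
- have -> : C = A *m Mi *m H.
    rewrite /C /B -/M -/Mi -mulmxA.
    have -> : A *m Mi - A = A *m (Mi - 1%:M) by rewrite mulmxBr mulmx1.
    congr (_ *m _).
    have e1 : H = 1%:M - M by rewrite /M opprB addrC subrK.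
    by rewrite e1 mulmxBr mulmx1 mulVmx.
  by apply: nonneg_mul => //; apply: nonneg_mul.
Qed.
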